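(* Let $C$ be a binary linear self-dual code of length $n$, let $i\in\{1,\dots,n\}$ be a coordinate position, and for $\delta\in\{0,1\}$ and $0\le k\le n$ let $$A_{k,\delta}=\left|\{v\in C : wt(v)=k,\ v[i]=\delta\}\right|.$$ Let $A_k$ be the number of codewords of $C$ of Hamming weight $k$ and $\rho=\sqrt2-1$. Then $$\sum_{k=0}^{n}A_{k,1}\rho^{k-1}=\sum_{k=0}^{n}A_{k,0}\rho^{k+1}\qquad\text{and}\qquad \sum_{k=0}^{n}A_{k,1}\rho^{k-1}=\frac{1+\rho}{4}\sum_{k=0}^{n}A_k\rho^{k}.$$ In particular, $\sum_{k=0}^{n}A_{k,1}\rho^{k-1}$ does not depend on the choice of the coordinate $i$.
   Context: A binary linear self-dual code $C$ of length $n$ is a linear subspace of $F^n$, $F=\{0,1\}$ the binary field, of dimension $n/2$ equal to its orthogonal complement under the standard dot product. $wt(v)$ denotes Hamming weight and $v[i]$ the $i$-th coordinate of $v$. *)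

(* Defs.v *)
From HB Require Import structures.
From mathcomp Require Import all_boot all_order all_algebra.
Set Implicit Arguments. Unset Strict Implicit. Unset Printing Implicit Defensive.
Import Order.TTheory GRing.Theory Num.Theory.
Local Open Scope ring_scope.

Notation bvec n := 'rV['F_2]_n.

Definition dotb (n : nat) (u v : bvec n) : 'F_2 := (u *m v^T) 0 0.

Definition wt (n : nat) (v : bvec n) : nat := #|[set j : 'I_n | v 0 j != 0]|.

Definition dual_code (n : nat) (C : {vspace bvec n}) : {set bvec n} :=
  [set v : bvec n | [forall u : bvec n, (u \in C) ==> (dotb u v == 0)]].

Definition self_dual (n : nat) (C : {vspace bvec n}) : Prop :=
  (\dim C = n./2)%N /\ forall v : bvec n, (v \in C) = (v \in dual_code C).

Definition A_w (n : nat) (C : {vspace bvec n}) (k : nat) : nat :=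
  #|[set v : bvec n | (v \in C) && (wt v == k)]|.

Definition A_wc (n : nat) (C : {vspace bvec n}) (i : 'I_n) (k : nat) (d : 'F_2) : nat :=
  #|[set v : bvec n | [&& v \in C, wt v == k & v 0 i == d]]|.

(* Main.v *)
Require Import Defs.
From HB Require Import structures.
From mathcomp Require Import all_boot all_order all_algebra.
From mathcomp Require Import lra ring.
Import Order.TTheory GRing.Theory Num.Theory.
Local Open Scope ring_scope.

Lemma F2c (b : 'F_2) : b = 0 \/ b = 1.
Proof. case: b => [[|[|b]] Hb]; [left|right|]; by [apply/val_inj|]. Qed.

Section Work.
Variable R : rcfType.

Definition chi (b : 'F_2) : R := if b == 0 then 1 else -1.

Lemma chiD a b : chi (a + b) = chi a * chi b.
Proof. by case: (F2c a) => ->; case: (F2c b) => ->; rewrite /chi /=; ring. Qed.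

Lemma chi0 : chi 0 = 1. Proof. by rewrite /chi eqxx. Qed.

Lemma sumF2 (G : 'F_2 -> R) : \sum_(b : 'F_2) G b = G 0 + G 1.
Proof.
rewrite (bigD1 0) //= (bigD1 1) //= big1 ?addr0 // => b /andP[H0 H1].
by case: (F2c b) H0 H1 => ->; rewrite eqxx.
Qed.

Lemma prod_sum n (G : 'I_n -> 'F_2 -> R) :
  \sum_(x : bvec n) \prod_j G j (x 0 j) = \prod_j \sum_(b : 'F_2) G j b.
Proof.
rewrite bigA_distr_bigA /=.
rewrite (reindex (fun x : bvec n => [ffun j => x 0 j])) /=.
  by apply: eq_bigr => x _; apply: eq_bigr => j _; rewrite ffunE.
apply: onW_bij; exists (fun f : {ffun 'I_n -> 'F_2} => \row_j f j).
  by move=> x; apply/rowP => j; rewrite !mxE ffunE.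
by move=> f; apply/ffunP => j; rewrite ffunE mxE.
Qed.

Lemma chi_dot n (u x : bvec n) : chi (dotb u x) = \prod_j chi (u 0 j * x 0 j).
Proof.
rewrite /dotb mxE (big_morph chi chiD chi0).
by apply: eq_bigr => j _; rewrite mxE.
Qed.

Definition rho : R := Num.sqrt 2 - 1.
Lemma rho_gt0 : 0 < rho.
Proof.
have h2 : Num.sqrt (2:R) ^+ 2 = 2 by rewrite sqr_sqrtr // ler0n.
have h0 : 0 <= Num.sqrt (2:R) by apply: sqrtr_ge0.
rewrite /rho; nra.
Qed.
Lemma rho2 : rho ^+ 2 = 1 - 2 * rho.
Proof.
have h2 : Num.sqrt (2:R) ^+ 2 = 2 by rewrite sqr_sqrtr // ler0n.
rewrite /rho; nra.
Qed.
Lemma rho_neq0 : rho != 0. Proof. by rewrite gt_eqF // rho_gt0. Qed.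

Definition w (b : 'F_2) : R := if b == 0 then 1 else rho.
Definition W {n} (x : bvec n) : R := \prod_j w (x 0 j).

Lemma dotbDl n (u v x : bvec n) : dotb (u + v) x = dotb u x + dotb v x.
Proof. by rewrite /dotb mulmxDl mxE. Qed.

Lemma fourier1 n (u : bvec n) :
  \sum_x chi (dotb u x) * W x = (1 + rho) ^+ n * W u.
Proof.
rewrite (eq_bigr (fun x : bvec n => \prod_j (chi (u 0 j * x 0 j) * w (x 0 j)))); last first.
  by move=> x _; rewrite chi_dot /W -big_split.
rewrite (@prod_sum n (fun j b => chi (u 0 j * b) * w b)) /W.
under eq_bigr => j _ do rewrite sumF2.
rewrite (eq_bigr (fun j => (1 + rho) * w (u 0 j))); last first.
  move=> j _; rewrite /w /chi mulr0 mulr1 !eqxx oner_eq0.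
  case: (F2c (u 0 j)) => ->; rewrite ?eqxx ?oner_eq0.
    by ring.
  have := rho2; nra.
by rewrite big_split /= prodr_const card_ord.
Qed.


Lemma char_sum n (C : {vspace bvec n}) (hC : self_dual C) (x : bvec n) :
  \sum_(u | u \in C) chi (dotb u x) =
  if x \in C then \sum_(u | u \in C) 1 else 0.
Proof.
case: ifP => Hx.
  apply: eq_bigr => u Hu.
  move: Hx; rewrite hC.2 inE => /forallP /(_ u) /implyP /(_ Hu) /eqP ->.
  exact: chi0.
move: Hx; rewrite hC.2 inE => /negbT; rewrite negb_forall => /existsP [u0].
rewrite negb_imply => /andP [Hu0 Hd].
have Hd1 : dotb u0 x = 1 by case: (F2c (dotb u0 x)) Hd => ->; rewrite ?eqxx.
set s := \sum_(u | u \in C) _.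
have : s = - s.
  rewrite {1}/s (reindex_inj (addIr u0)) /=.
  rewrite /s -sumrN; apply: eq_big => u.
    by rewrite rpredDr.
  by move=> _; rewrite dotbDl chiD Hd1 /chi oner_eq0 mulrN1.
move=> h; lra.
Qed.

Lemma poisson n (C : {vspace bvec n}) (hC : self_dual C) (f : bvec n -> R) :
  \sum_(u | u \in C) \sum_x chi (dotb u x) * f x =
  (\sum_(u | u \in C) 1) * \sum_(x | x \in C) f x.
Proof.
rewrite exchange_big /= mulr_sumr.
under eq_bigr => x _ do rewrite -mulr_suml char_sum //.
rewrite (bigID (fun x => x \in C)) /= [X in _ + X]big1 ?addr0.
  by apply: eq_bigr => x ->.
by move=> x /negbTE ->; rewrite mul0r.
Qed.


Lemma dot_e n (i : 'I_n) (x : bvec n) : dotb (delta_mx 0 i) x = x 0 i.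
Proof. by rewrite /dotb -rowE !mxE. Qed.

Lemma W_shift n (i : 'I_n) (u : bvec n) :
  rho * W (u + delta_mx 0 i) = if u 0 i == 0 then rho ^+ 2 * W u else W u.
Proof.
rewrite /W (bigD1 i) //= [in RHS](bigD1 i) //=.
rewrite (eq_bigr (fun j => w (u 0 j))); last first.
  by move=> j Hj; rewrite !mxE eqxx /= (negbTE Hj) addr0.
rewrite !mxE !eqxx /= /w.
case: (F2c (u 0 i)) => ->; rewrite ?eqxx ?oner_eq0 ?add0r ?oner_eq0.
  by ring.
have h11 : (1 + 1 : 'F_2) = 0 by apply/val_inj.
by rewrite mulr1n h11 eqxx mul1r.
Qed.


Lemma W_ge0 n (x : bvec n) : 0 <= W x.
Proof.
apply: prodr_ge0 => j _; rewrite /w; case: ifP => _ //.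
exact: ltW rho_gt0.
Qed.

Lemma W0 n : W (0 : bvec n) = 1.
Proof. by rewrite /W big1 // => j _; rewrite mxE /w eqxx. Qed.

Lemma split_i n (C : {vspace bvec n}) (i : 'I_n) (g : bvec n -> R) :
  \sum_(u | u \in C) g u =
  \sum_(u | (u \in C) && (u 0 i == 0)) g u + \sum_(u | (u \in C) && (u 0 i == 1)) g u.
Proof.
rewrite (bigID (fun u : bvec n => u 0 i == 0)) /=; congr (_ + _).
apply: eq_bigl => u; congr (_ && _).
by case: (F2c (u 0 i)) => ->; rewrite ?eqxx ?oner_eq0 // eq_sym oner_eq0.
Qed.

Lemma keyZ n (C : {vspace bvec n}) (hC : self_dual C) (i : 'I_n) :
  \sum_(u | (u \in C) && (u 0 i == 1)) W u =
  rho ^+ 2 * \sum_(u | (u \in C) && (u 0 i == 0)) W u.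
Proof.
set N := \sum_(u | u \in C) (1 : R).
set Z0 := \sum_(u | (u \in C) && (u 0 i == 0)) W u.
set Z1 := \sum_(u | (u \in C) && (u 0 i == 1)) W u.
have hN : N = (1 + rho) ^+ n.
  have P1 := @poisson n C hC (@W n).
  rewrite (eq_bigr (fun u => (1+rho)^+n * W u)) in P1; last by move=> u _; rewrite fourier1.
  rewrite -mulr_sumr in P1.
  have Zpos : 0 < \sum_(u | u \in C) W u.
    rewrite (bigD1 0) ?rpred0 //= W0.
    apply: (lt_le_trans ltr01); rewrite lerDl.
    by apply: sumr_ge0 => x _; exact: W_ge0.
  apply: (mulIf (lt0r_neq0 Zpos)); by rewrite P1 mulrC.
have P2 := @poisson n C hC (fun x => chi (x 0 i) * W x).
have E : forall u : bvec n, \sum_x chi (dotb u x) * (chi (x 0 i) * W x) =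
     (1 + rho) ^+ n * W (u + delta_mx 0 i).
  move=> u; rewrite -fourier1; apply: eq_bigr => x _.
  by rewrite dotbDl chiD dot_e mulrA.
rewrite (eq_bigr (fun u => (1+rho)^+n * W (u + delta_mx 0 i))) in P2; last by move=> u _; rewrite E.
rewrite -mulr_sumr -/N hN (@split_i n C i) in P2.
have hr1p : 0 < 1 + rho by have := rho_gt0; lra.
have hp : (1 + rho) ^+ n != 0 by rewrite expf_neq0 // gt_eqF.
move/(mulfI hp): P2 => P2.
have e0 : \sum_(u | (u \in C) && (u 0 i == 0)) chi (u 0 i) * W u = Z0.
  by apply: eq_bigr => u /andP [_ /eqP ->]; rewrite chi0 mul1r.
have e1 : \sum_(u | (u \in C) && (u 0 i == 1)) chi (u 0 i) * W u = - Z1.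
  rewrite -sumrN; apply: eq_bigr => u /andP [_ /eqP ->].
  by rewrite /chi oner_eq0 mulN1r.
have f0 : \sum_(u | (u \in C) && (u 0 i == 0)) W (u + delta_mx 0 i) = rho * Z0.
  rewrite /Z0 mulr_sumr; apply: eq_bigr => u /andP [_ H].
  have := @W_shift n i u; rewrite H => h.
  have := rho_neq0 => hr.
  apply: (mulfI hr); rewrite h; ring.
have f1 : \sum_(u | (u \in C) && (u 0 i == 1)) W (u + delta_mx 0 i) = Z1 / rho.
  rewrite /Z1 mulr_suml; apply: eq_bigr => u /andP [_ /eqP H].
  have := @W_shift n i u; rewrite H oner_eq0 => h.
  have := rho_neq0 => hr.
  by apply: (mulfI hr); rewrite h mulrCA divff // mulr1.
rewrite (@split_i n C i (fun u => W (u + delta_mx 0 i))) e0 e1 f0 f1 in P2.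
have h2 := rho2; have hr := rho_neq0.
have hr1 : 1 + rho != 0 by rewrite gt_eqF.
have : Z1 * (1 + rho) = rho ^+ 2 * Z0 * (1 + rho).
  have : rho * (rho * Z0 + Z1 / rho) = rho * (Z0 + - Z1) by rewrite P2.
  rewrite mulrDr mulrA mulrCA divff // mulr1 => h.
  have e : Z1 * (1 + rho) = rho * Z0 - rho^+2 * Z0 by rewrite mulrDr mulr1 expr2; lra.
  rewrite e; apply/eqP; rewrite -subr_eq0 (_ : _ - _ = rho * Z0 * (1 - 2 * rho - rho ^+ 2)); last by ring.
  by rewrite h2 subrr mulr0.
by move/(mulIf hr1).
Qed.


Lemma wt_le n (v : bvec n) : (wt v < n.+1)%N.
Proof. by rewrite ltnS /wt; apply: leq_trans (max_card _) _; rewrite card_ord. Qed.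

Lemma count_sum n (P : pred (bvec n)) (F : nat -> R) :
  \sum_(0 <= k < n.+1) #|[set v | P v && (wt v == k)]|%:R * F k =
  \sum_(v | P v) F (wt v).
Proof.
rewrite big_mkord.
rewrite (eq_bigr (fun k : 'I_n.+1 => \sum_(v | P v) (if wt v == k then F k else 0))); last first.
  move=> k _; rewrite -sum1_card natr_sum mulr_suml.
  rewrite big_mkcond [RHS]big_mkcond /=; apply: eq_bigr => v _; rewrite inE.
  by case: (P v); case: (wt v == k) => //=; rewrite mul1r.
rewrite exchange_big /=; apply: eq_bigr => v _.
rewrite -big_mkcond /= (big_pred1 (Ordinal (wt_le n v))) //.
Qed.


Lemma W_wt n (u : bvec n) : W u = rho ^+ wt u.
Proof.
rewrite /W /wt (eq_bigr (fun j => if u 0 j != 0 then rho else 1)); last first.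
  by move=> j _; rewrite /w; case: (u 0 j == 0).
by rewrite -big_mkcond -prodr_const; apply: eq_bigl => j; rewrite inE.
Qed.

Lemma conv_wc n (C : {vspace bvec n}) i d (F : nat -> R) :
  \sum_(0 <= k < n.+1) (A_wc C i k d)%:R * F k =
  \sum_(u | (u \in C) && (u 0 i == d)) F (wt u).
Proof.
rewrite -count_sum; apply: eq_bigr => k _; congr (_%:R * _).
apply: eq_card => v; rewrite !inE; by case: (v \in C); case: (wt v == k); case: (v 0 i == d).
Qed.

Lemma conv_w n (C : {vspace bvec n}) (F : nat -> R) :
  \sum_(0 <= k < n.+1) (A_w C k)%:R * F k = \sum_(u | u \in C) F (wt u).
Proof.
rewrite -count_sum; apply: eq_bigr => k _; congr (_%:R * _).
Qed.

Lemma part1 n (C : {vspace bvec n}) (hC : self_dual C) (i : 'I_n) :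
  \sum_(0 <= k < n.+1) (A_wc C i k 1)%:R * rho ^ (k%:Z - 1) =
  rho * \sum_(u | (u \in C) && (u 0 i == 0)) W u.
Proof.
have hr := rho_neq0.
rewrite conv_wc.
rewrite (eq_bigr (fun u => W u / rho)); last first.
  by move=> u _; rewrite expfzDr // -exprnP exprN1 W_wt.
rewrite -mulr_suml keyZ //; by field.
Qed.

Lemma part0 n (C : {vspace bvec n}) (i : 'I_n) :
  \sum_(0 <= k < n.+1) (A_wc C i k 0)%:R * rho ^ (k%:Z + 1) =
  rho * \sum_(u | (u \in C) && (u 0 i == 0)) W u.
Proof.
have hr := rho_neq0.
rewrite conv_wc mulr_sumr; apply: eq_bigr => u _.
by rewrite expfzDr // -exprnP expr1z W_wt mulrC.
Qed.

Lemma part2 n (C : {vspace bvec n}) (hC : self_dual C) (i : 'I_n) :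
  \sum_(0 <= k < n.+1) (A_wc C i k 1)%:R * rho ^ (k%:Z - 1) =
  (1 + rho) / 4 * \sum_(0 <= k < n.+1) (A_w C k)%:R * rho ^+ k.
Proof.
rewrite part1 // conv_w.
have E := @split_i n C i W; rewrite keyZ // in E.
pose Z0 := \sum_(u | (u \in C) && (u 0 i == 0)) W u.
transitivity ((1 + rho) / 4 * (Z0 + rho ^+ 2 * Z0)); last first.
  congr (_ * _); apply: etrans (esym E) _; apply: eq_bigr => u _; exact: W_wt.
rewrite -/Z0.
have h2 := rho2.
have e4 : (4 : R) != 0 by rewrite pnatr_eq0.
have E1 : (1 + rho) / 4 * (Z0 + rho ^+ 2 * Z0) = (1 + rho) * (2 - 2 * rho) / 4 * Z0.
  by rewrite h2; field.
have e : (1 + rho) * (2 - 2 * rho) = 4 * rho.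
  rewrite (_ : (1 + rho) * (2 - 2 * rho) = 2 - 2 * rho ^+ 2); last by ring.
  by rewrite h2; ring.
by rewrite E1 e; field.
Qed.

End Work.

Theorem theorem7 (R : rcfType) (n : nat) (C : {vspace 'rV['F_2]_n})
    (hC : self_dual C) (i : 'I_n) :
  let rho : R := Num.sqrt 2 - 1 in
  let S := fun j : 'I_n =>
    \sum_(0 <= k < n.+1) (A_wc C j k 1)%:R * rho ^ (k%:Z - 1) in
  [/\ S i = \sum_(0 <= k < n.+1) (A_wc C i k 0)%:R * rho ^ (k%:Z + 1),
      S i = (1 + rho) / 4 * \sum_(0 <= k < n.+1) (A_w C k)%:R * rho ^+ k
    & forall j : 'I_n, S j = S i].
Proof.
move=> r S.
have hr : r = rho R by [].
rewrite /S hr; split.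
- by rewrite part1 // part0.
- exact: part2.
- by move=> j; rewrite !part2.
Qed.
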